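(* Let $a,c\ge 0$ with $a\neq c$, and let $f^*:\{0,1\}^4\to\mathbb{R}_{\ge 0}$ be given by $f^*(0011)=f^*(1100)=a$, $f^*(0101)=f^*(1010)=c$, and $f^*(x)=0$ for all other $x\in\{0,1\}^4$. Then $f^*$ is not windable.
   Context: Windability. For a finite set $J$ and $x\in\{0,1\}^J$, let $\mathcal{M}_x$ be the set of partitions of $\{i\in J: x_i=1\}$ into pairs and at most one singleton. For $x,y\in\{0,1\}^J$, $x\oplus y$ denotes coordinatewise XOR, and for a block $S$ of a partition, $x\oplus S$ denotes the vector obtained from $x$ by replacing $x_i$ with $1-x_i$ for the one or two elements $i\in S$. A function $f:\{0,1\}^J\to\mathbb{R}_{\ge 0}$ is windable if there exist values $B(x,y,M)\ge 0$, for all $x,y\in\{0,1\}^J$ and all $M\in\mathcal{M}_{x\oplus y}$, such that (i) $f(x)f(y)=\sum_{M\in\mathcal{M}_{x\oplus y}}B(x,y,M)$ for all $x,y\in\{0,1\}^J$, and (ii) $B(x,y,M)=B(x\oplus S,y\oplus S,M)$ for all $x,y\in\{0,1\}^J$, all $M\in\mathcal{M}_{x\oplus y}$ and all $S\in M$. Here $J=\{1,2,3,4\}$ and a string $x_1x_2x_3x_4$ denotes the input $(x_1,x_2,x_3,x_4)$. *)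

(* Defs.v *)
From HB Require Import structures.
From mathcomp Require Import all_boot all_order all_algebra.
From mathcomp Require Import reals.
Set Implicit Arguments. Unset Strict Implicit. Unset Printing Implicit Defensive.
Import Order.TTheory GRing.Theory Num.Theory.
Local Open Scope ring_scope.

Section Wind.
Variable J : finType.

Definition bvec := {ffun J -> bool}.

Definition bxor (x y : bvec) : bvec := [ffun i => x i (+) y i].

Definition bflip (S : {set J}) (x : bvec) : bvec :=
  [ffun i => if i \in S then ~~ x i else x i].

Definition bsupp (x : bvec) : {set J} := [set i | x i].

Definition is_pairing (x : bvec) (M : {set {set J}}) : bool :=
  [&& partition M (bsupp x),
      [forall S in M, (#|S| == 1)%N || (#|S| == 2)%N] &
      (#|[set S in M | #|S| == 1%N]| <= 1)%N].

Definition windable (R : realType) (f : bvec -> R) : Prop :=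
  exists B : bvec -> bvec -> {set {set J}} -> R,
    [/\ (forall x y M, is_pairing (bxor x y) M -> 0 <= B x y M),
        (forall x y, f x * f y = \sum_(M | is_pairing (bxor x y) M) B x y M) &
        (forall x y M, is_pairing (bxor x y) M ->
           forall S, S \in M -> B x y M = B (bflip S x) (bflip S y) M)].
End Wind.

(* the input string x1x2x3x4, with J = 'I_4 and x_k the coordinate k-1 *)
Definition bits4 (b1 b2 b3 b4 : bool) : bvec 'I_4 :=
  [ffun i : 'I_4 => nth false [:: b1; b2; b3; b4] i].

Definition fstar (R : realType) (a c : R) (x : bvec 'I_4) : R :=
  if (x == bits4 false false true true) || (x == bits4 true true false false) then a
  else if (x == bits4 false true false true) || (x == bits4 true false true false) then c
  else 0.

(* Main.v *)
Require Import Defs.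
From HB Require Import structures.
From mathcomp Require Import all_boot all_order all_algebra.
From mathcomp Require Import reals.
Import Order.TTheory GRing.Theory Num.Theory.
Local Open Scope ring_scope.

Definition o0 : 'I_4 := @Ordinal 4 0 isT.
Definition o1 : 'I_4 := @Ordinal 4 1 isT.
Definition o2 : 'I_4 := @Ordinal 4 2 isT.
Definition o3 : 'I_4 := @Ordinal 4 3 isT.

Lemma ord4_cases (i : 'I_4) : [\/ i = o0, i = o1, i = o2 | i = o3].
Proof.
case: i => [[|[|[|[|//]]]] Hi].
- by constructor 1; apply: val_inj.
- by constructor 2; apply: val_inj.
- by constructor 3; apply: val_inj.
- by constructor 4; apply: val_inj.
Qed.

Lemma bits4E b1 b2 b3 b4 :
  [/\ bits4 b1 b2 b3 b4 o0 = b1, bits4 b1 b2 b3 b4 o1 = b2,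
      bits4 b1 b2 b3 b4 o2 = b3 & bits4 b1 b2 b3 b4 o3 = b4].
Proof. by rewrite !ffunE. Qed.

Lemma bits4_ext (x : bvec 'I_4) :
  x = bits4 (x o0) (x o1) (x o2) (x o3).
Proof.
apply/ffunP => i; case: (ord4_cases i) => ->; by rewrite ffunE.
Qed.

Lemma bflip_bits S b1 b2 b3 b4 :
  bflip S (bits4 b1 b2 b3 b4) =
  bits4 (b1 (+) (o0 \in S)) (b2 (+) (o1 \in S)) (b3 (+) (o2 \in S)) (b4 (+) (o3 \in S)).
Proof.
apply/ffunP => i; rewrite !ffunE.
case: (ord4_cases i) => -> /=;
  by case: (_ \in S); rewrite ?addbT ?addbF.
Qed.

Lemma bxor_bits a1 a2 a3 a4 b1 b2 b3 b4 :
  bxor (bits4 a1 a2 a3 a4) (bits4 b1 b2 b3 b4) =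
  bits4 (a1 (+) b1) (a2 (+) b2) (a3 (+) b3) (a4 (+) b4).
Proof.
apply/ffunP => i; rewrite !ffunE.
by case: (ord4_cases i) => -> /=; rewrite ?ffunE.
Qed.

Lemma bxor_flip (J : finType) S (x y : bvec J) :
  bxor (bflip S x) (bflip S y) = bxor x y.
Proof.
apply/ffunP => i; rewrite !ffunE.
by case: (i \in S); case: (x i); case: (y i).
Qed.

Lemma bits4_eq a1 a2 a3 a4 b1 b2 b3 b4 :
  (bits4 a1 a2 a3 a4 == bits4 b1 b2 b3 b4) =
  [&& a1 == b1, a2 == b2, a3 == b3 & a4 == b4].
Proof.
apply/eqP/and4P.
- move=> E; have G := fun i => congr1 (fun f : bvec 'I_4 => f i) E.
  move: (G o0) (G o1) (G o2) (G o3); rewrite !ffunE /= => -> -> -> ->.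
  by rewrite !eqxx.
- by case=> /eqP -> /eqP -> /eqP -> /eqP ->.
Qed.

Theorem proposition2 (R : realType) (a c : R) :
  0 <= a -> 0 <= c -> a != c -> ~ windable (@fstar R a c).
Proof.
move=> a0 c0 ac [B [Hpos Hsum Hinv]].
set u := bits4 false false true true.
set v := bits4 true true false false.
set u' := bits4 false true false true.
set v' := bits4 true false true false.
have Huv : bxor u v = bits4 true true true true by rewrite bxor_bits.
have Huv' : bxor u' v' = bits4 true true true true by rewrite bxor_bits.
have Z : forall x y M S, is_pairing (bxor x y) M -> S \in M ->
    fstar a c (bflip S x) * fstar a c (bflip S y) = 0 -> B x y M = 0.
  move=> x y M S HM SM Hz.
  rewrite (Hinv x y M HM S SM).
  have HM' : is_pairing (bxor (bflip S x) (bflip S y)) M by rewrite bxor_flip.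
  have := Hsum (bflip S x) (bflip S y); rewrite Hz => /esym /psumr_eq0P H.
  apply: H => //; exact: Hpos.
have key : forall M, is_pairing (bits4 true true true true) M -> B u v M = B u' v' M.
  move=> M HM.
  have HM1 : is_pairing (bxor u v) M by rewrite Huv.
  have HM2 : is_pairing (bxor u' v') M by rewrite Huv'.
  move: (HM) => /and3P [/and3P [/eqP Hcov Htriv H0] /forall_inP Hsz _].
  have inM : forall i, exists2 S, S \in M & i \in S.
    move=> i; have : i \in cover M.
      rewrite Hcov inE; case: (ord4_cases i) => ->; by rewrite ffunE.
    by move/bigcupP => [S SM iS]; exists S.
  case: (inM o0) => S SM S0.
  case E1: (o1 \in S); case E2: (o2 \in S); case E3: (o3 \in S);
    try (rewrite (Z _ _ _ S HM1 SM) ?(Z _ _ _ S HM2 SM) //;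
         rewrite !bflip_bits S0 E1 E2 E3 /fstar !bits4_eq /=;
         by rewrite ?mul0r ?mulr0).
  + exfalso.
    have ST : S = setT.
      apply/setP => i; rewrite inE; case: (ord4_cases i) => ->; by [].
    have := Hsz S SM; by rewrite ST cardsT card_ord.
  + case: (inM o1) => T TM T1.
    have TS : T != S by apply/eqP => ET; rewrite -ET T1 in E1.
    have Hd := (trivIsetP Htriv) T S TM SM TS.
    have T0 : (o0 \in T) = false by apply: (disjointFl Hd).
    have T3 : (o3 \in T) = false by apply: (disjointFl Hd).
    case F2: (o2 \in T);
      last by rewrite (Z _ _ _ T HM1 TM) ?(Z _ _ _ T HM2 TM) //;
         rewrite !bflip_bits T0 T1 F2 T3 /fstar !bits4_eq /=;
         rewrite ?mul0r ?mulr0.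
    rewrite (Hinv u v M HM1 S SM) (Hinv u' v' M HM2 S SM) !bflip_bits S0 E1 E2 E3 /=.
    have HM3 : is_pairing (bxor (bits4 true false true false) (bits4 false true false true)) M
      by rewrite bxor_bits.
    by rewrite (Hinv _ _ M HM3 T TM) !bflip_bits T0 T1 F2 T3.
have fu : fstar a c u = a by rewrite /fstar !bits4_eq.
have fv : fstar a c v = a by rewrite /fstar !bits4_eq.
have fu' : fstar a c u' = c by rewrite /fstar !bits4_eq.
have fv' : fstar a c v' = c by rewrite /fstar !bits4_eq.
have E0 : fstar a c u * fstar a c v = fstar a c u' * fstar a c v'.
  rewrite (Hsum u v) (Hsum u' v') Huv Huv'.
  by apply: eq_bigr => M HM; apply: key.
have E : a ^+ 2 = c ^+ 2 by move: E0; rewrite fu fv fu' fv' !expr2.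

move/eqP: E; rewrite (eqrXn2 (isT : (0 < 2)%N) a0 c0) => /eqP Eac.
by rewrite Eac eqxx in ac.
Qed.
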